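(* For every base $\mathscr{B}$, finite multisets of atoms $S,T$, and IMLL formulas $\varphi,\psi,\chi$: if $\Vdash^{S}_{\mathscr{B}}\varphi\otimes\psi$ and $\varphi,\psi\Vdash^{T}_{\mathscr{B}}\chi$, then $\Vdash^{S,T}_{\mathscr{B}}\chi$.
   Context: Fix a countably infinite set $\mathbb{A}$ of atoms. IMLL formulas: $\varphi::= p\in\mathbb{A}\mid\varphi\otimes\varphi\mid \mathrm{I}\mid\varphi\multimap\varphi$. Collections are finite multisets; ''$,$'' denotes multiset union. An atomic rule is $(P_1\triangleright p_1,\dots,P_n\triangleright p_n)\Rightarrow p$ ($n\ge0$, $P_i$ finite multisets of atoms); a base is a set of atomic rules. Derivability $\vdash_{\mathscr{B}}$ is the least relation with (Ref) $[p]\vdash_{\mathscr{B}}p$; (App) if $(P_1\triangleright p_1,\dots,P_n\triangleright p_n)\Rightarrow p\in\mathscr{B}$ and $S_i,P_i\vdash_{\mathscr{B}}p_i$ for all $i$, then $S_1,\dots,S_n\vdash_{\mathscr{B}}p$. Support: (At) $\Vdash^{P}_{\mathscr{B}}p$ iff $P\vdash_{\mathscr{B}}p$; ($\otimes$) $\Vdash^{P}_{\mathscr{B}}\varphi\otimes\psi$ iff for every $\mathscr{X}\supseteq\mathscr{B}$, multiset of atoms $U$, atom $p$, if $\varphi,\psi\Vdash^{U}_{\mathscr{X}}p$ then $\Vdash^{P,U}_{\mathscr{X}}p$; ($\mathrm{I}$) $\Vdash^{P}_{\mathscr{B}}\mathrm{I}$ iff for every $\mathscr{X}\supseteq\mathscr{B}$,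 $U$, $p$, if $\Vdash^{U}_{\mathscr{X}}p$ then $\Vdash^{P,U}_{\mathscr{X}}p$; ($\multimap$) $\Vdash^{P}_{\mathscr{B}}\varphi\multimap\psi$ iff $\varphi\Vdash^{P}_{\mathscr{B}}\psi$; (comma) for nonempty $\Gamma,\Delta$, $\Vdash^{P}_{\mathscr{B}}\Gamma,\Delta$ iff $P=U,V$ for some $U,V$ with $\Vdash^{U}_{\mathscr{B}}\Gamma$, $\Vdash^{V}_{\mathscr{B}}\Delta$ (singleton $[\varphi]$ supported iff $\varphi$ is); (Inf) for nonempty $\Gamma$, $\Gamma\Vdash^{P}_{\mathscr{B}}\varphi$ iff for every $\mathscr{X}\supseteq\mathscr{B}$ and $U$, if $\Vdash^{U}_{\mathscr{X}}\Gamma$ then $\Vdash^{P,U}_{\mathscr{X}}\varphi$. *)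

(* Defs.v *)
From HB Require Import structures.
From mathcomp Require Import all_boot.
From mathcomp Require Import finmap multiset.

Set Implicit Arguments.
Unset Strict Implicit.
Unset Printing Implicit Defensive.

Local Open Scope fset_scope.
Local Open Scope mset_scope.

Definition atom := nat.

Definition amset := {mset nat}.

Inductive formula : Type :=
| Atom  : atom -> formula
| Tens  : formula -> formula -> formula
| One   : formula
| Lolli : formula -> formula -> formula.

(* Atomic rule (P_1 |> p_1, ..., P_n |> p_n) => p *)
Definition rule := (seq (amset * atom) * atom)%type.

Definition base := rule -> Prop.

Definition ext (B X : base) : Prop := forall r, B r -> X r.

Inductive deriv (B : base) : amset -> atom -> Prop :=
| DRef p : deriv B [mset p] p
| DApp prems p S : B (prems, p) -> derivs B prems S -> deriv B S p
(* derivs B [(P_1,p_1);...;(P_n,p_n)] S  iff  S = S_1,...,S_n with S_i,P_i |-_B p_i *)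
with derivs (B : base) : seq (amset * atom) -> amset -> Prop :=
| DSnil : derivs B [::] mset0
| DScons P q prems S1 S :
    deriv B (S1 `+` P) q -> derivs B prems S -> derivs B ((P, q) :: prems) (S1 `+` S).

Fixpoint supp (B : base) (P : amset) (phi : formula) {struct phi} : Prop :=
  match phi with
  | Atom p => deriv B P p
  | Tens f g =>
      (* for all X >= B, U, p: if f,g ||-^U_X p then ||-^{P,U}_X p *)
      forall (X : base) (U : amset) (p : atom), ext B X ->
        (forall (Y : base) (W : amset), ext X Y ->
           (exists U1 U2, W = U1 `+` U2 /\ supp Y U1 f /\ supp Y U2 g) ->
           deriv Y (U `+` W) p) ->
        deriv X (P `+` U) p
  | One =>
      forall (X : base) (U : amset) (p : atom), ext B X ->
        deriv X U p -> deriv X (P `+` U) p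
  | Lolli f g =>
      (* f ||-^P_B g, by (Inf) with the singleton context [f] *)
      forall (X : base) (U : amset), ext B X ->
        supp X U f -> supp X (P `+` U) g
  end.

Fixpoint suppC (B : base) (P : amset) (phi : formula) (Gamma : seq formula)
  {struct Gamma} : Prop :=
  match Gamma with
  | [::] => supp B P phi
  | psi :: Gamma' =>
      exists U V, P = U `+` V /\ supp B U phi /\ suppC B V psi Gamma'
  end.

Definition infer (B : base) (P : amset) (phi : formula) (Gamma : seq formula)
  (chi : formula) : Prop :=
  forall (X : base) (U : amset), ext B X ->
    suppC X U phi Gamma -> supp X (P `+` U) chi.

(* Main.v *)
Require Import Defs.
From HB Require Import structures.
From mathcomp Require Import all_boot.
From mathcomp Require Import finmap multiset.

Local Open Scope mset_scope.
Set Implicit Arguments.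

Fixpoint deriv_mono (B X : base) (H : ext B X) (P : amset) (p : atom)
  (d : deriv B P p) {struct d} : deriv X P p :=
  match d in deriv _ P p return deriv X P p with
  | DRef q => DRef X q
  | DApp prems0 q S0 hB ds => DApp (H _ hB) (derivs_mono H ds)
  end
with derivs_mono (B X : base) (H : ext B X) prems S
  (ds : derivs B prems S) {struct ds} : derivs X prems S :=
  match ds in derivs _ prems S return derivs X prems S with
  | DSnil => DSnil X
  | DScons P0 q prems0 S1 S0 d ds' => DScons (deriv_mono H d) (derivs_mono H ds')
  end.

Lemma ext_trans (A B C : base) : ext A B -> ext B C -> ext A C.
Proof. by move=> h1 h2 r /h1 /h2. Qed.

Lemma ext_refl (A : base) : ext A A.
Proof. by []. Qed.

Lemma supp_mono (phi : formula) : forall (B X : base) P,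
  ext B X -> supp B P phi -> supp X P phi.
Proof.
case: phi => [p|f g||f g] B X P H /=.
- exact: deriv_mono.
- move=> h Y U q HXY; apply: h; exact: ext_trans H HXY.
- move=> h Y U q HXY; apply: h; exact: ext_trans H HXY.
- move=> h Y U HXY; apply: h; exact: ext_trans H HXY.
Qed.

Lemma gen (chi : formula) : forall B S T phi psi,
  supp B S (Tens phi psi) ->
  (forall X U1 U2, ext B X -> supp X U1 phi -> supp X U2 psi ->
     supp X (T `+` (U1 `+` U2)) chi) ->
  supp B (S `+` T) chi.
Proof.
elim: chi => [p|f IHf g IHg||f IHf g IHg] B S T phi psi HS HT /=.
- apply: (HS B T p (@ext_refl B)) => Y W HY [U1 [U2 [-> [h1 h2]]]].
  exact: HT.
- move=> X U p HX K.
  rewrite -msetDA.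
  apply: (HS X (T `+` U) p HX) => Y W HY [U1 [U2 [-> [h1 h2]]]].
  have := HT Y U1 U2 (ext_trans HX HY) h1 h2 Y U p (@ext_refl Y).
  rewrite msetDAC -msetDA; apply => Y' W' HY' E.
  exact: (K Y' W' (ext_trans HY HY') E).
- move=> X U p HX d.
  rewrite -msetDA.
  apply: (HS X (T `+` U) p HX) => Y W HY [U1 [U2 [-> [h1 h2]]]].
  have := HT Y U1 U2 (ext_trans HX HY) h1 h2 Y U p (@ext_refl Y)
            (deriv_mono HY d).
  by rewrite msetDAC -msetDA.
- move=> X U HX hf.
  rewrite -msetDA.
  apply: (IHg X S (T `+` U) phi psi); first exact: (@supp_mono (Tens phi psi) B X S HX HS).
  move=> X' U1 U2 HX' h1 h2.
  have := HT X' U1 U2 (ext_trans HX HX') h1 h2 X' U (@ext_refl X')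
            (@supp_mono f X X' U HX' hf).
  by rewrite msetDAC -msetDA.
Qed.

Theorem lemma2 (B : base) (S T : amset) (phi psi chi : formula) :
  supp B S (Tens phi psi) ->
  infer B T phi [:: psi] chi ->
  supp B (S `+` T) chi.
Proof.
move=> HS HI; apply: (@gen chi B S T phi psi HS) => X U1 U2 HX h1 h2.
apply: HI => //; by exists U1, U2.
Qed.
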